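(* For every model class $\mathcal M\subseteq\mathcal M^+$, every $\gamma>0$ and every $\bar M\in\mathcal M^+$, $$\mathrm{dec}^{\mathrm o}_{\mathrm r,\gamma}(\mathcal M,\bar M)\le\mathrm{dec}^{\mathrm c}_{\mathrm r,\gamma^{-1/2}}(\mathcal M,\bar M).$$
   Context: Models are kernels $M:\Pi\to\Delta([0,1]\times\mathcal O)$ (rewards in $[0,1]$); $\mathcal M^+$ is the set of all models. $f^M(\pi)=\mathbb E_{(r,o)\sim M(\pi)}[r]$, $\pi_M\in\arg\max f^M$, $g^M(\pi)=f^M(\pi_M)-f^M(\pi)$; $D^2_H$ is squared Hellinger distance. Constrained regret DEC $\mathrm{dec}^{\mathrm c}_{\mathrm r,\varepsilon}(\mathcal M,\bar M)=\inf_{p\in\Delta(\Pi)}\sup_{M\in\mathcal M}\{\mathbb E_{\pi\sim p}[g^M(\pi)]:\mathbb E_{\pi\sim p}[D^2_H(M(\pi),\bar M(\pi))]\le\varepsilon^2\}$ (value $0$ if empty); offset regret DEC $\mathrm{dec}^{\mathrm o}_{\mathrm r,\gamma}(\mathcal M,\bar M)=\inf_{p\in\Delta(\Pi)}\sup_{M\in\mathcal M}\mathbb E_{\pi\sim p}[g^M(\pi)-\gamma D^2_H(M(\pi),\bar M(\pi))]$. *)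

(* Defs.v *)
From HB Require Import structures.
From mathcomp Require Import all_boot all_algebra.
From mathcomp Require Import all_classical all_reals all_analysis.
From mathcomp Require Import measurable_realfun lebesgue_integral charge.
Import GRing.Theory Num.Theory.

Set Implicit Arguments.
Unset Strict Implicit.
Unset Printing Implicit Defensive.

Local Open Scope classical_set_scope.
Local Open Scope ring_scope.
Local Open Scope ereal_scope.
Local Open Scope charge_scope.

Section hellinger.
Context d (T : measurableType d) (R : realType) (P Q : probability T R).

Definition hell_dom : set T -> \bar R := measure_add P Q.
HB.instance Definition _ := Measure.on hell_dom.

Lemma hell_dom_fin : fin_num_fun hell_dom.
Proof.
move=> A mA; rewrite /hell_dom measure_addE fin_numD.
by rewrite !fin_num_measure.
Qed.

HB.instance Definition _ := @Measure_isFinite.Build _ _ _ hell_dom hell_dom_fin.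

Definition hellinger2 : \bar R :=
  \int[hell_dom]_x
    ((Num.sqrt (fine ('d (charge_of_finite_measure P) '/d hell_dom x))
      - Num.sqrt (fine ('d (charge_of_finite_measure Q) '/d hell_dom x))) ^+ 2)%:E.

End hellinger.

(* Models: probability (Markov) kernels Pi -> Delta([0,1] x O),
   i.e. pi |-> M pi is a probability, measurable in pi.  A reward-      *)
(* observation pair is an element of R * O; the kernel is required to   *)
Definition is_kernel d d' (Pi : measurableType d) (Y : measurableType d')
  (R : realType) (k : Pi -> probability Y R) : Prop :=
  forall U, measurable U -> measurable_fun [set: Pi] (k ^~ U).

Record model d d' (Pi : measurableType d) (O : measurableType d') (R : realType)
  := Model {
  model_kernel :> Pi -> probability (R * O)%type R ;
  model_measurable : is_kernel model_kernel ;
  model_reward01 : forall pi : Pi,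
      model_kernel pi [set z : R * O | (0 <= z.1 <= 1)%R] = 1
}.

Section dec.
Context d d' (Pi : measurableType d) (O : measurableType d') (R : realType).
Local Notation model := (model Pi O R).

Definition fM (M : model) (pi : Pi) : \bar R :=
  \int[M pi]_z (z.1)%:E.

Definition gM (M : model) (pi : Pi) : \bar R :=
  ereal_sup (range (fM M)) - fM M pi.

Definition hellM (M Mbar : model) (pi : Pi) : \bar R :=
  hellinger2 (M pi) (Mbar pi).

Definition dec_o (gamma : R) (MM : set model) (Mbar : model) : \bar R :=
  ereal_inf (range (fun p : probability Pi R =>
    ereal_sup [set \int[p]_pi (gM M pi - gamma%:E * hellM M Mbar pi)
              | M in MM])).

(* constrained regret DEC (value 0 when the constraint set is empty) *)
Definition dec_c (eps : R) (MM : set model) (Mbar : model) : \bar R :=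
  ereal_inf (range (fun p : probability Pi R =>
    let S := [set \int[p]_pi gM M pi
             | M in [set M | MM M /\
                      \int[p]_pi hellM M Mbar pi <= (eps ^+ 2)%:E]] in
    if `[< S = set0 >] then 0 else ereal_sup S)).

End dec.

(* Main.v *)
Require Import Defs.
From mathcomp Require Import all_boot all_algebra.
From mathcomp Require Import all_classical all_reals all_analysis.
From mathcomp Require Import measurable_realfun lebesgue_integral charge.
Import GRing.Theory Num.Theory.
From mathcomp Require Import all_order.
From mathcomp Require Import lra ring.
Import HBNNSimple.
Import Order.TTheory.
Local Open Scope classical_set_scope.
Local Open Scope ring_scope.
Local Open Scope ereal_scope.
Lemma le_integralT d (T : measurableType d) (R : realType)
  (mu : {measure set T -> \bar R}) (f1 f2 : T -> \bar R) :
  (forall x, f1 x <= f2 x) -> \int[mu]_x f1 x <= \int[mu]_x f2 x.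
Proof.
move=> f12; rewrite /integral !patch_setT.
apply: leeB.
- apply: ereal_sup_le => _ [h hf <-]; exists h => //= x.
  apply: le_trans (hf x) _.
  by apply: (@funepos_le _ _ setT) => //; rewrite inE.
- apply: ereal_sup_le => _ [h hf <-]; exists h => //= x.
  apply: le_trans (hf x) _.
  by apply: (@funeneg_le _ _ setT) => //; rewrite inE.
Qed.
Lemma fM_bounds (R : realType) (d d' : measure_display)
  (Pi : measurableType d) (O : measurableType d') (M : model Pi O R) pi :
  0 <= fM M pi <= 1.
Proof.
set P := M pi.
pose A := [set z : R * O | (0 <= z.1 <= 1)%R].
have mA : measurable A.
  have -> : A = setT `&` (fst @^-1` `[0%R, 1%R]).
    apply/seteqP; split => z /=; rewrite in_itv /=; [by []| by case].
  by apply: measurable_fst => //; exact: measurable_itv.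
have PA : P (~` A) = 0.
  by rewrite probability_setC // /P model_reward01 subee.
have mf : measurable_fun setT (fun z : R * O => (z.1)%:E).
  by apply/measurable_EFinP; exact: measurable_fst.
have aeA : forall (Q : (R * O)%type -> Prop), (forall z, A z -> Q z) ->
    \forall x \ae P, Q x.
  move=> Q HQ; exists (~` A); split => //; first exact: measurableC.
  by apply: subsetC => z /HQ.
have pos : \int[P]_z ((fun z : R * O => (z.1)%:E)^\+ z) <= 1.
  apply: le_trans.
    apply: (@ae_ge0_le_integral _ _ _ P setT measurableT _ (cst 1)) => //.
    - exact: measurable_funepos.
    - apply: aeA => z /andP[z0 z1] _ /=.
      by rewrite funeposE /= ge_max lee_fin z1 lee01.
  by rewrite integral_cst // mul1e; exact: probability_le1.

have neg : \int[P]_z ((fun z : R * O => (z.1)%:E)^\- z) = 0.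
  apply/eqP; rewrite eq_le integral_ge0 // andbT.
  apply: le_trans.
    apply: (@ae_ge0_le_integral _ _ _ P setT measurableT _ (cst 0)) => //.
    - exact: measurable_funeneg.
    - apply: aeA => z /andP[z0 z1] _ /=.
      by rewrite funenegE /= ge_max lee_fin oppr_le0 z0 lexx.
  by rewrite integral_cst // mul0e.
unfold fM. rewrite integralE neg sube0 pos andbT.
exact: integral_ge0.
Qed.
Lemma gM_bounds {R : realType} {d d' : measure_display}
  {Pi : measurableType d} {O : measurableType d'} (M : model Pi O R) pi :
  exists r : R, gM M pi = r%:E /\ (0 <= r <= 1)%R.
Proof.
have fb := @fM_bounds R d d' Pi O M.
have s1 : ereal_sup (range (fM M)) <= 1.
  by apply: ge_ereal_sup => _ [x _ <-]; case/andP: (fb x).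
have s0 : fM M pi <= ereal_sup (range (fM M)).
  by apply: ereal_sup_ubound; exists pi.
rewrite /gM; move: s0 s1 (fb pi).
move: (ereal_sup _) (fM M pi) => s f.
case: s => [s| |]; case: f => [f| |] //=; rewrite ?lee_fin.
- move=> sf s1 /andP[f0 f1]; exists (s - f)%R; split => //.
  apply/andP; split; lra.
Qed.

Lemma hellM_ge0 {R : realType} {d d' : measure_display}
  {Pi : measurableType d} {O : measurableType d'} (M Mbar : model Pi O R) pi :
  0 <= hellM M Mbar pi.
Proof.
unfold hellM, hellinger2; apply: integral_ge0 => x _.
by rewrite lee_fin; exact: sqr_ge0.
Qed.

Lemma pt_le (R : realType) (r gam s : R) (h : \bar R) :
  (0 <= r <= 1)%R -> (0 < gam)%R -> 0 <= h ->
  (r%:E - gam%:E * h <= r%:E) /\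
  (s%:E <= h -> r%:E - gam%:E * h <= 1 - gam%:E * s%:E).
Proof.
move=> /andP[r0 r1] g0; case: h => [h| |] //= h0.
- rewrite lee_fin in h0; split.
  + rewrite ?EFinN -?EFinM -?EFinB lee_fin.
    have := mulr_ge0 (ltW g0) h0; lra.
  + rewrite lee_fin => sh; rewrite ?EFinN -?EFinM -?EFinB lee_fin.
    have := ler_wpM2l (ltW g0) sh; lra.
- rewrite gt0_muley ?lte_fin // addeNy.
  by split => [|_]; exact: leNye.
Qed.

Lemma Vc_prop (R : realType) (S : set (\bar R)) :
  (forall y, S y -> 0 <= y) ->
  0 <= (if `[< S = set0 >] then 0 else ereal_sup S) /\
  (forall y, S y -> y <= (if `[< S = set0 >] then 0 else ereal_sup S)).
Proof.
move=> S0; case: asboolP => [->|Sn]; first by split => // y.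
have [y Sy] : exists y, S y.
  apply: contrapT => H; apply: Sn; apply/seteqP; split => x // Sx.
  by apply: H; exists x.
split; last by move=> z Sz; apply: ereal_sup_ubound.
exact: le_trans (S0 _ Sy) (ereal_sup_ubound Sy).
Qed.

Theorem proposition4p3 (R : realType) (d d' : measure_display)
  (Pi : measurableType d) (O : measurableType d')
  (MM : set (model Pi O R)) (gamma : R) (Mbar : model Pi O R) :
  (0 < gamma)%R ->
  dec_o gamma MM Mbar <= dec_c (gamma `^ (- 2^-1))%R MM Mbar.
Proof.
move=> g0.
have eps2 : ((gamma `^ (- 2^-1)) ^+ 2 = gamma^-1)%R.
  by rewrite powRN powR12_sqrt ?(ltW g0) // exprVn sqr_sqrtr // ltW.
rewrite /dec_o /dec_c.
apply: le_ereal_inf_tmp => _ [p _ <-].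
apply: le_trans (ereal_inf_lbound _) _; first by exists p.
apply: ge_ereal_sup => _ [M MMM <-].
rewrite eps2; cbv zeta.
match goal with |- context [ereal_sup ?S] =>
  have HV : (forall y, S y -> 0 <= y) end.
  move=> _ [M' _ <-]; apply: integral_ge0 => x _.
  by have [r [-> /andP[r0 _]]] := gM_bounds M' x; rewrite lee_fin.
have [V0 VS] := Vc_prop _ _ HV.
have hge x : 0 <= hellM M Mbar x by exact: hellM_ge0.
have [hle|hlt] := leP (\int[p]_pi hellM M Mbar pi) (gamma^-1)%:E.
  apply: le_trans (VS _ _); last by exists M.
  apply: le_integralT => x.
  have [r [-> rb]] := gM_bounds M x.
  exact: (pt_le _ _ _ 0 _ rb g0 (hge x)).1.
apply: le_trans V0.
move: hlt; rewrite ge0_integralTE // => /ereal_sup_gt [_ [s sh <-] lts].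
have H1 : \int[p]_pi (gM M pi - gamma%:E * hellM M Mbar pi) <=
    \int[p]_x ((1 - gamma%:E * (s x)%:E)%E).
  apply: le_integralT => x.
  have [r [-> rb]] := gM_bounds M x.
  exact: (pt_le _ _ _ (s x) _ rb g0 (hge x)).2 (sh x).
apply: le_trans H1 _.
have iS : p.-integrable setT (EFin \o s).
  apply: measurable_bounded_integrable => //.
  - by apply: (le_lt_trans (probability_le1 p measurableT)); exact: ltry.
  - exact: simple_bounded.
have i1 : p.-integrable setT (cst 1).
  exact: (finite_measure_integrable_cst _ 1%R measurableT).
have -> : \int[p]_x ((1 - gamma%:E * (s x)%:E)%E) =
    \int[p]_x ((cst 1) \- (fun x => gamma%:E * (EFin \o s) x)) x by [].
rewrite integralB //; last exact: integrableZl iS.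
rewrite integralZl // integral_cst //.
rewrite [X in (1 * X)%E](_ : _ = 1); last exact: probability_setT.
rewrite mul1e.
rewrite integralT_nnsfun.
move: lts; case: (sintegral p s) => [y| |] //=.
- rewrite !lte_fin lee_fin => lty.
  move: lty; rewrite -(ltr_pM2l g0) mulfV ?gt_eqF //; lra.
- by rewrite gt0_muley ?lte_fin // addeNy leNye.
Qed.
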